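(* Let $A=(a_{ij})\in M_n(\mathbb{C})$ and suppose the Schur map $S_A\colon M_n(\mathbb{C})\to M_n(\mathbb{C})$, $S_A(B)=A\circ B$, is unital, i.e. $S_A(I)=I$. Then the following are equivalent: (i) $S_A$ is multiplicative and $*$-preserving (i.e. $S_A(BC)=S_A(B)S_A(C)$ and $S_A(B^* )=S_A(B)^*$ for all $B,C$); (ii) $S_A$ is a completely positive algebra isomorphism of $M_n(\mathbb{C})$; (iii) $A$ has rank one, is normal, and has all diagonal entries equal to $1$; (iv) $A$ has rank one, all entries of $A$ have modulus $1$, and all diagonal entries equal $1$; (v) $A$ is self-adjoint, $\mathrm{Spec}(A)=\{0,n\}$ with the eigenvalue $0$ of multiplicity $n-1$, and $\|S_A\|=1$; (vi) $A$ has no zero entries, and both $A$ and $A^{[-1]}$ are positive matrices with all diagonal entries equal to $1$.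
   Context: $A\circ B=(a_{ij}b_{ij})$ is the entrywise (Schur) product. A positive matrix means a Hermitian matrix with nonnegative spectrum. For a matrix with no zero entries, $A^{[-1]}=(1/a_{ij})$. $\|S_A\|$ is the operator norm of the linear map $S_A$ when $M_n(\mathbb{C})$ carries the operator norm. A map $\Phi$ on $M_n(\mathbb{C})$ is completely positive if $\mathrm{Id}_{M_k}\otimes\Phi$ is positive for every $k$. $\mathrm{Spec}$ denotes the set of eigenvalues. *)

(* Defs.v *)
(* The complex field is modelled by an arbitrary
   numClosedFieldType C (e.g. C = R[i] for a real closed field R),
   following mathcomp's spectral.v. *)
From HB Require Import structures.
From mathcomp Require Import all_boot all_order all_algebra.
From mathcomp Require Import sesquilinear spectral.
Set Implicit Arguments. Unset Strict Implicit. Unset Printing Implicit Defensive.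
Import Order.TTheory GRing.Theory Num.Theory.
Local Open Scope ring_scope.
Local Open Scope sesquilinear_scope.

Section Defs.
Context {C : numClosedFieldType}.

Definition schur {n : nat} (A B : 'M[C]_n) : 'M[C]_n :=
  \matrix_(i, j) (A i j * B i j).

Definition adjmx {n : nat} (B : 'M[C]_n) : 'M[C]_n := B ^t*.

Definition psdmx {m : nat} (M : 'M[C]_m) : Prop :=
  M ^t* = M /\ forall a : C, eigenvalue M a -> 0 <= a.

(* Id_{M_k} (x) Phi, acting on M_k(M_n(C)) = M_{kn}(C), block by block *)
Definition ampl {n : nat} (k : nat) (Phi : 'M[C]_n -> 'M[C]_n)
  (X : 'I_k -> 'I_k -> 'M[C]_n) : 'M[C]_(\sum_(i < k) n) :=
  \mxblock_(i < k, j < k) Phi (X i j).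

Definition blockmx {n : nat} (k : nat) (X : 'I_k -> 'I_k -> 'M[C]_n)
  : 'M[C]_(\sum_(i < k) n) := \mxblock_(i < k, j < k) X i j.

Definition completely_positive {n : nat} (Phi : 'M[C]_n -> 'M[C]_n) : Prop :=
  forall (k : nat) (X : 'I_k -> 'I_k -> 'M[C]_n),
    psdmx (blockmx X) -> psdmx (ampl Phi X).

Definition algebra_iso {n : nat} (Phi : 'M[C]_n -> 'M[C]_n) : Prop :=
  [/\ forall (a : C) (B D : 'M[C]_n), Phi (a *: B + D) = a *: Phi B + Phi D,
      forall B D : 'M[C]_n, Phi (B *m D) = Phi B *m Phi D,
      Phi 1%:M = 1%:M
    & bijective Phi].

Definition vnorm2 {n : nat} (x : 'cV[C]_n) : C := \sum_i `|x i 0| ^+ 2.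

(* ||B|| <= c for the operator norm (c >= 0), written out *)
Definition opnorm_le {n : nat} (B : 'M[C]_n) (c : C) : Prop :=
  forall x : 'cV[C]_n, vnorm2 (B *m x) <= c ^+ 2 * vnorm2 x.

(* ||S_A|| = 1 where ||S_A|| = sup { ||A o B|| : ||B|| <= 1 } *)
Definition schur_norm_eq1 {n : nat} (A : 'M[C]_n) : Prop :=
  (forall B : 'M[C]_n, opnorm_le B 1 -> opnorm_le (schur A B) 1) /\
  (forall k : C, 0 <= k < 1 ->
     exists B : 'M[C]_n, opnorm_le B 1 /\ ~ opnorm_le (schur A B) k).

Definition entry_inv {n : nat} (A : 'M[C]_n) : 'M[C]_n :=
  \matrix_(i, j) (A i j)^-1.

End Defs.

(* Main.v *)
Require Import Defs.
From HB Require Import structures.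
From mathcomp Require Import all_boot all_order all_algebra.
From mathcomp Require Import sesquilinear spectral.
From mathcomp Require Import ring.
Set Implicit Arguments. Unset Strict Implicit. Unset Printing Implicit Defensive.
Import Order.TTheory GRing.Theory Num.Theory.
Local Open Scope ring_scope.
Local Open Scope sesquilinear_scope.
Section S.
Context {C : numClosedFieldType} (n : nat) (A : 'M[C]_n.+1).
Hypothesis hd : forall i, A i i = 1.

Definition KK := (forall i j k, A i j * A j k = A i k) /\ (forall i j, A j i = (A i j)^*).

Lemma schur_delta (M : 'M[C]_n.+1) i j : schur M (delta_mx i j) = M i j *: delta_mx i j.
Proof.
apply/matrixP => p q; rewrite !mxE.
by case: (eqVneq p i) => [->|]; case: (eqVneq q j) => [->|] //=; rewrite ?mulr0 ?mulr1.
Qed.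

Lemma KK_norm : KK -> forall i j, A i j * (A i j)^* = 1.
Proof. by move=> [hm hc] i j; rewrite -hc hm hd. Qed.

Lemma i_KK : (forall B D : 'M[C]_n.+1, schur A (B *m D) = schur A B *m schur A D) /\
    (forall B : 'M[C]_n.+1, schur A (adjmx B) = adjmx (schur A B)) -> KK.
Proof.
move=> [hm hs]; split.
  move=> i j k; have := hm (delta_mx i j) (delta_mx j k).
  rewrite mul_delta_mx !schur_delta -scalemxAl -scalemxAr mul_delta_mx scalerA.
  by move/matrixP/(_ i k); rewrite !mxE !eqxx /= !mulr1 => ->.
move=> i j; have := hs (delta_mx j i).
have ->: adjmx (delta_mx j i) = delta_mx i j :> 'M[C]_n.+1.
  by apply/matrixP => p q; rewrite !mxE conjC_nat andbC.
rewrite !schur_delta; move/matrixP/(_ i j); rewrite !mxE !eqxx /= !mulr1.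
by move=> ->; rewrite conjCK.
Qed.

Lemma KK_i : KK -> (forall B D : 'M[C]_n.+1, schur A (B *m D) = schur A B *m schur A D) /\
    (forall B : 'M[C]_n.+1, schur A (adjmx B) = adjmx (schur A B)).
Proof.
move=> [hm hc]; split.
  move=> B D; apply/matrixP => i j; rewrite !mxE mulr_sumr; apply: eq_bigr => l _.
  by rewrite !mxE -(hm i l j); ring.
move=> B; apply/matrixP => i j; rewrite !mxE rmorphM /= (hc i j) conjCK.
by [].
Qed.
End S.
Section S2.
Context {C : numClosedFieldType} (n : nat) (A : 'M[C]_n.+1).
Hypothesis hd : forall i, A i i = 1.

Lemma rank1_dec : \rank A = 1%N -> exists u v : 'I_n.+1 -> C, forall i j, A i j = u i * v j.
Proof.
move=> rkA; have := mulmx_base A; move: (col_base A) (row_base A).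
rewrite rkA => cb rb eqA; exists (fun i => cb i 0), (fun j => rb 0 j).
by move=> i j; rewrite -eqA mxE big_ord1.
Qed.

Lemma unit_KK : \rank A = 1%N -> (forall i j, A i j * (A i j)^* = 1) -> KK A.
Proof.
move=> /rank1_dec [u [v huv]] h1.
have hm : forall i j k, A i j * A j k = A i k.
  move=> i j k; have := hd j; rewrite !huv => e.
  by rewrite -[RHS]mulr1 -e; ring.
split=> // i j.
by rewrite -[A j i]mulr1 -(h1 i j) mulrA [A j i * _]mulrC hm hd mul1r.
Qed.

Lemma KK_herm : KK A -> A ^t* = A.
Proof. by move=> [_ hc]; apply/matrixP => i j; rewrite !mxE -hc. Qed.

Lemma KK_rank1 : KK A -> \rank A = 1%N.
Proof.
move=> [hm hc].
have eA : A = (\col_i A i 0) *m (\row_j A 0 j).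
  by apply/matrixP => i j; rewrite !mxE big_ord1 !mxE hm.
apply/eqP; rewrite eqn_leq; apply/andP; split.
  by rewrite eA; apply: leq_trans (mxrankM_maxl _ _) (rank_leq_col _).
rewrite lt0n mxrank_eq0; apply/eqP => A0.
by have := hd 0; rewrite A0 mxE => /eqP; rewrite eq_sym oner_eq0.
Qed.

Lemma iii_KK : [/\ \rank A = 1%N, A \is normalmx & forall i, A i i = 1] -> KK A.
Proof.
move=> [rk /normalmxP hn _]; apply: unit_KK => //.
have [u [v huv]] := rank1_dec rk.
pose p i := u i * (u i)^*; pose q i := v i * (v i)^*.
have hpq i : p i * q i = 1.
  have := hd i; rewrite huv => e.
  by rewrite /p /q mulrACA -rmorphM /= e rmorph1 mulr1.
pose Su := \sum_k p k; pose Sv := \sum_k q k.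
have eq1 i : p i * Sv = q i * Su.
  have := congr1 (fun M : 'M[C]_n.+1 => M i i) hn; rewrite !mxE.
  rewrite /Sv /Su !mulr_sumr => e.
  transitivity (\sum_j A i j * (A ^t* ) j i).
    by apply: eq_bigr => k _; rewrite ?mxE !huv /p /q rmorphM /=; ring.
  rewrite e; apply: eq_bigr => k _.
  by rewrite ?mxE !huv /p /q rmorphM /=; ring.
have q0 i : 0 <= q i by apply: mul_conjC_ge0.
have p0 i : 0 <= p i by apply: mul_conjC_ge0.
have Sv0 : Sv != 0.
  apply/eqP => h; have := psumr_eq0P (fun k _ => q0 k) h (i:=ord0) isT.
  by move=> e; have := hpq ord0; rewrite e mulr0 => /eqP; rewrite eq_sym oner_eq0.
have eq2 i : p i ^+ 2 * Sv = Su.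
  by rewrite expr2 -mulrA eq1 mulrA hpq mul1r.
have pp i j : p i = p j.
  apply/eqP; rewrite -(@eqrXn2 _ 2) //; apply/eqP; apply: (mulIf Sv0); by rewrite !eq2.
move=> i j; rewrite huv rmorphM /=; transitivity (p i * q j); first by rewrite /p /q; ring.
by rewrite (pp i j) hpq.
Qed.

Lemma iv_KK : [/\ \rank A = 1%N, forall i j, `|A i j| = 1 & forall i, A i i = 1] -> KK A.
Proof.
move=> [rk hn _]; apply: unit_KK => // i j.
by rewrite -normCK hn expr1n.
Qed.

Lemma KK_iii : KK A -> [/\ \rank A = 1%N, A \is normalmx & forall i, A i i = 1].
Proof.
move=> hK; split=> //; first exact: KK_rank1.
by apply/normalmxP; rewrite KK_herm.
Qed.

Lemma KK_iv : KK A -> [/\ \rank A = 1%N, forall i j, `|A i j| = 1 & forall i, A i i = 1].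
Proof.
move=> hK; split=> //; first exact: KK_rank1.
move=> i j; have := KK_norm hd hK i j; rewrite -normCK => e.
by apply/eqP; rewrite -(@eqrXn2 _ 2) // ?e ?expr1n.
Qed.
End S2.
Section S3.
Context {C : numClosedFieldType}.

Lemma adj_mul m1 m2 m3 (X : 'M[C]_(m1, m2)) (Y : 'M[C]_(m2, m3)) :
  (X *m Y) ^t* = Y ^t* *m X ^t*.
Proof. by rewrite trmx_mul map_mxM. Qed.

Lemma psd_form m (M : 'M[C]_m) : psdmx M -> forall y : 'rV_m, 0 <= (y *m M *m y ^t*) 0 0.
Proof.
move=> [hM hev] y.
have nM : M \is normalmx by apply/normalmxP; rewrite hM.
move/orthomx_spectralP: nM => eM.
have Pu := spectral_unitarymx M.
move: eM; set P := spectralmx M; set d := spectral_diag M => eM.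
have PPt : P *m P ^t* = 1%:M by apply/unitarymxP.
rewrite invmx_unitary // in eM.
have dge k : 0 <= d 0 k.
  apply: hev; apply/eigenvalueP; exists (row k P).
    rewrite {1}eM !mulmxA -row_mul PPt -row_mul mul1mx row_diag_mx -scalemxAl -rowE.
    by [].
  apply/eqP => h; have : row k (P *m P ^t* ) = 0 by rewrite row_mul h mul0mx.
  rewrite PPt row1 => /matrixP/(_ 0 k); rewrite !mxE !eqxx /=.
  by move/eqP; rewrite oner_eq0.
set z := y *m P ^t*.
have -> : y *m M *m y ^t* = z *m diag_mx d *m z ^t*.
  by rewrite eM /z adj_mul trmxCK !mulmxA.
rewrite mxE; apply: sumr_ge0 => k _; rewrite mul_mx_diag !mxE.
rewrite -mulrA [d 0 k * _]mulrC mulrA; apply: mulr_ge0 => //.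
exact: mul_conjC_ge0.
Qed.
End S3.
Section S4.
Context {C : numClosedFieldType} (m : nat) (M : 'M[C]_m).

Definition Bf (x y : 'rV[C]_m) := (x *m M *m y ^t*) 0 0.

Lemma Bf_addl x1 x2 y : Bf (x1 + x2) y = Bf x1 y + Bf x2 y.
Proof. by rewrite /Bf !mulmxDl mxE. Qed.
Lemma Bf_addr x y1 y2 : Bf x (y1 + y2) = Bf x y1 + Bf x y2.
Proof. by rewrite /Bf linearD /= map_mxD mulmxDr mxE. Qed.
Lemma Bf_scalel a x y : Bf (a *: x) y = a * Bf x y.
Proof. by rewrite /Bf -!scalemxAl mxE. Qed.
Lemma Bf_scaler a x y : Bf x (a *: y) = a^* * Bf x y.
Proof. by rewrite /Bf linearZ /= map_mxZ -scalemxAr mxE. Qed.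
Lemma Bf_delta i j : Bf (delta_mx 0 i) (delta_mx 0 j) = M i j.
Proof.
rewrite /Bf -rowE.
have -> : (delta_mx 0 j : 'rV[C]_m) ^t* = delta_mx j 0.
  by apply/matrixP => p q; rewrite !mxE conjC_nat andbC.
rewrite mxE (bigD1 j) //= !mxE !eqxx mulr1 big1 ?addr0 // => k hk; by rewrite !mxE (negbTE hk) /= mulr0.
Qed.
End S4.
Section S5.
Context {C : numClosedFieldType} (m : nat) (M : 'M[C]_m).
Hypothesis hP : psdmx M.
Hypothesis hd : forall i, M i i = 1.

Lemma ge0_eq (x y : C) : 0 <= x -> x = y -> 0 <= y.
Proof. by move=> h <-. Qed.

Lemma psd_herm i j : M j i = (M i j)^*.
Proof. by have := congr1 (fun X : 'M[C]_m => X i j) hP.1; rewrite !mxE => <-; rewrite conjCK. Qed.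

Lemma psd_Bf y : 0 <= Bf M y y.
Proof. exact: psd_form. Qed.

Lemma psd_le1 i j : M i j * (M i j)^* <= 1.
Proof.
case: (eqVneq i j) => [->|ne]; first by rewrite hd rmorph1 mulr1.
have := psd_Bf (delta_mx 0 i + (- M i j) *: delta_mx 0 j).
rewrite !(Bf_addl, Bf_addr, Bf_scalel, Bf_scaler, Bf_delta) !hd (psd_herm i j) rmorphN /=.
move=> h; rewrite -subr_ge0; apply: (ge0_eq h); ring.
Qed.
End S5.
Section S6.
Context {C : numClosedFieldType} (m : nat) (M : 'M[C]_m).
Hypothesis hP : psdmx M.
Hypothesis hd : forall i, M i i = 1.
Hypothesis hu : forall i j, M i j * (M i j)^* = 1.

Lemma psd_ne0 i j : M i j != 0.
Proof. by apply/eqP => e; have := hu i j; rewrite e mul0r => /eqP; rewrite eq_sym oner_eq0. Qed.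

Lemma psd_inv i j : (M i j)^* = (M i j)^-1.
Proof. by apply: (mulfI (psd_ne0 i j)); rewrite hu mulfV ?psd_ne0. Qed.

Lemma psd_mult i j k : M i j * M j k = M i k.
Proof.
case: (eqVneq i j) => [->|nij]; first by rewrite hd mul1r.
case: (eqVneq j k) => [->|njk]; first by rewrite hd mulr1.
case: (eqVneq i k) => [<-|nik]; first by rewrite (psd_herm hP i j) hu hd.
have := psd_Bf hP (2%:R *: delta_mx 0 i + (- M i j) *: delta_mx 0 j + (- M i k) *: delta_mx 0 k).
rewrite !(Bf_addl, Bf_addr, Bf_scalel, Bf_scaler, Bf_delta) !hd (psd_herm hP i j)
  (psd_herm hP i k) (psd_herm hP j k) !rmorphN /= conjC_nat !psd_inv => h.
have a0 := psd_ne0 i j; have b0 := psd_ne0 j k; have c0 := psd_ne0 i k.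
set a := M i j in h a0 *; set b := M j k in h b0 *; set c := M i k in h c0 *.
set w := a * b / c.
have w0 : w != 0 by rewrite /w !mulf_neq0 ?invr_eq0.
have wc : w^* = w^-1.
  rewrite /w !rmorphM /= fmorphV /= /a /b /c !psd_inv -/a -/b -/c.
  by field; rewrite a0 b0 c0.
have e : (w - 1) * (w - 1)^* = 0.
  apply/eqP; rewrite eq_le mul_conjC_ge0 andbT.
  rewrite rmorphB /= rmorph1 wc -oppr_ge0.
  apply: (ge0_eq h); rewrite /w; field; rewrite a0 b0 c0.
  by [].
move/eqP: e; rewrite mul_conjC_eq0 subr_eq0 => /eqP /divr1_eq.
by [].
Qed.
End S6.
Section S7.
Context {C : numClosedFieldType} (n : nat) (A : 'M[C]_n.+1).
Hypothesis hd : forall i, A i i = 1.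

Lemma KK_psd : KK A -> psdmx A.
Proof.
move=> hK; have [hm hc] := hK; split; first exact: KK_herm.
move=> a /eigenvalueP [v hv v0].
pose s := \sum_i v 0 i * A i 0.
have hj j : a * v 0 j = s * A 0 j.
  have := congr1 (fun X : 'rV[C]_n.+1 => X 0 j) hv; rewrite !mxE => <-.
  rewrite /s mulr_suml; apply: eq_bigr => i _; by rewrite -(hm i 0 j) mulrA.
have has : a * s = s * n.+1%:R.
  have -> : n.+1%:R = \sum_(i < n.+1) (1 : C) by rewrite sumr_const card_ord.
  rewrite /s !mulr_sumr; apply: eq_bigr => i _.
  by rewrite mulrA hj -mulrA hm hd mulr1.
have [j vj] : exists j, v 0 j != 0.
  case: (pickP (fun j => v 0 j != 0)) => [j hj0 | h0]; first by exists j.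
  case/negP: v0; apply/eqP/matrixP => p q; rewrite ord1 mxE.
  by have := h0 q => /= /negbFE /eqP.
case: (eqVneq s 0) => [s0|s0].
  have := hj j; rewrite s0 mul0r => /eqP; rewrite mulf_eq0 (negbTE vj) orbF.
  by move/eqP ->.
have -> : a = n.+1%:R by apply: (mulIf s0); rewrite has mulrC.
by rewrite ler0n.
Qed.

End S7.
Section S7b.
Context {C : numClosedFieldType} (n : nat) (A : 'M[C]_n.+1).
Hypothesis hd : forall i, A i i = 1.

Lemma vi_KK : [/\ forall i j, A i j != 0,
        psdmx A /\ (forall i, A i i = 1)
      & psdmx (entry_inv A) /\ (forall i, entry_inv A i i = 1)] -> KK A.
Proof.
move=> [hz [hP _] [hQ hQd]].
have hu i j : A i j * (A i j)^* = 1.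
  apply/le_anti; rewrite psd_le1 //=.
  have := psd_le1 hQ hQd i j; rewrite !mxE fmorphV /= -invfM invf_le1 //.
  by rewrite mul_conjC_gt0.
split; last by move=> i j; apply: psd_herm.
exact: psd_mult.
Qed.

Lemma KK_vi : KK A -> [/\ forall i j, A i j != 0,
        psdmx A /\ (forall i, A i i = 1)
      & psdmx (entry_inv A) /\ (forall i, entry_inv A i i = 1)].
Proof.
move=> hK; have [hm hc] := hK; have hu := KK_norm hd hK.
have hz i j : A i j != 0.
  by apply/eqP => e; have := hu i j; rewrite e mul0r => /eqP; rewrite eq_sym oner_eq0.
have hB i j : entry_inv A i j = A j i.
  rewrite mxE; apply: (mulfI (hz i j)); rewrite mulfV ?hz // (hc i j).
  by rewrite hu.
have hBd i : entry_inv A i i = 1 by rewrite hB hd.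
split => //; first by split=> //; apply: KK_psd.
split => //; apply: (KK_psd hBd); split.
  by move=> i j k; rewrite !hB mulrC hm.
by move=> i j; rewrite !hB hc.
Qed.
End S7b.
Section S8.
Context {R : comNzRingType}.

Lemma det_rank1 N (u : 'cV[R]_N) (v : 'rV[R]_N) (x : R) :
  \det (x%:M - u *m v) * x = (x - (v *m u) 0 0) * x ^+ N.
Proof.
pose M := block_mx (1%:M : 'M_1) v u (x%:M : 'M_N).
have e1 : M = block_mx 1%:M 0 u 1%:M *m block_mx 1%:M v 0 (x%:M - u *m v).
  rewrite mulmx_block !mul1mx !mulmx1 ?mul0mx ?mulmx0 ?addr0 ?add0r.
  by rewrite addrC subrK.
have e2 : M *m block_mx (x%:M : 'M_1) 0 (- u) 1%:M =
    block_mx (x%:M - v *m u) v 0 (x%:M).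
  rewrite mulmx_block !mul1mx !mulmx1 ?mul0mx ?mulmx0 ?addr0 ?add0r.
  rewrite mul_mx_scalar mul_scalar_mx mulmxN.
  by rewrite scalerN addrN.
have := congr1 determinant e2.
rewrite det_mulmx det_lblock det_ublock det_scalar1 det1 mulr1.
rewrite e1 det_mulmx det_lblock det_ublock !det1 !mul1r det_mx11 !mxE eqxx mulr1n.
by rewrite det_scalar.
Qed.
End S8.
Section S9.
Context {C : numClosedFieldType} (n : nat) (A : 'M[C]_n.+1).
Hypothesis hd : forall i, A i i = 1.

Lemma KK_char : KK A -> char_poly A = 'X ^+ n * ('X - (n.+1%:R)%:P).
Proof.
move=> [hm hc].
pose u : 'cV[C]_n.+1 := \col_i A i 0; pose v : 'rV[C]_n.+1 := \row_j A 0 j.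
have eA : A = u *m v.
  by apply/matrixP => i j; rewrite !mxE big_ord1 !mxE hm.
have cuv : (v *m u) 0 0 = n.+1%:R.
  rewrite mxE (eq_bigr (fun _ => 1)) ?sumr_const ?card_ord // => k _.
  by rewrite !mxE hm hd.
have X0 : ('X : {poly C}) != 0 by rewrite polyX_eq0.
apply: (mulIf X0).
rewrite /char_poly /char_poly_mx eA map_mxM det_rank1 -map_mxM mxE cuv.
by rewrite exprS; ring.
Qed.
End S9.
Section S10.
Context {C : numClosedFieldType}.

Lemma delta_mul N (i j : 'I_N) (x : 'cV[C]_N) : delta_mx i j *m x = x j 0 *: delta_mx i 0.
Proof.
apply/matrixP => p q; rewrite ord1 !mxE (bigD1 j) //= big1 => [|k hk].
  by rewrite !mxE eqxx andbT addr0 mulrC.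
by rewrite !mxE (negbTE hk) andbF mul0r.
Qed.

Lemma vnorm2_sd N (a : C) (i : 'I_N) : vnorm2 (a *: delta_mx i 0 : 'cV[C]_N) = `|a| ^+ 2.
Proof.
rewrite /vnorm2 (bigD1 i) //= big1 => [|p hp].
  by rewrite !mxE !eqxx mulr1 addr0.
by rewrite !mxE (negbTE hp) mulr0 normr0 expr0n.
Qed.

Lemma vnorm2_ge0 N (x : 'cV[C]_N) : 0 <= vnorm2 x.
Proof. by apply: sumr_ge0 => i _; rewrite exprn_ge0. Qed.

Lemma opnorm_delta N (i j : 'I_N) : opnorm_le (delta_mx i j : 'M[C]_N) 1.
Proof.
move=> x; rewrite delta_mul vnorm2_sd expr1n mul1r /vnorm2 (bigD1 j) //=.
by rewrite lerDl; apply: sumr_ge0 => k _; rewrite exprn_ge0.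
Qed.

Lemma adj_zero N (Y : 'M[C]_N) : Y ^t* *m Y = 0 -> Y = 0.
Proof.
move=> h; apply/matrixP => i j; have := congr1 (fun X : 'M[C]_N => X j j) h.
rewrite !mxE => e.
have e' : \sum_k Y k j * (Y k j)^* = 0.
  apply: etrans e; apply: eq_bigr => k _; by rewrite !mxE mulrC.
have := psumr_eq0P (fun k _ => mul_conjC_ge0 (Y k j)) e' (i := i) isT.
by move/eqP; rewrite mul_conjC_eq0 ?mxE => /eqP.
Qed.

Lemma adj_exp N (M : 'M[C]_N.+1) : M ^t* = M -> forall k, (M ^+ k) ^t* = M ^+ k.
Proof.
move=> h; elim=> [|k IH]; first by rewrite !expr0 trmx1 map_mx1.
by rewrite exprS -mulmxE adj_mul mulmxE IH h -exprSr exprS.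
Qed.

Lemma reduce N (M Nm : 'M[C]_N.+1) : M ^t* = M -> Nm ^t* = Nm ->
  forall k, M ^+ k.+1 * Nm = 0 -> M * Nm = 0.
Proof.
move=> hM hN; elim=> [|k IH] h; first by rewrite expr1 in h.
apply: IH; apply: adj_zero.
rewrite adj_mul adj_exp // hN mulmxE.
by rewrite {1}exprSr -!mulrA (mulrA M) -exprS h !mulr0.
Qed.

Lemma sum_unit_eq N (a : 'I_N -> C) c : (forall k, a k * (a k)^* = 1) -> c * c^* = 1 ->
  \sum_k a k = N%:R * c -> forall k, a k = c.
Proof.
move=> ha hc hs.
have e : \sum_k (a k - c) * (a k - c)^* = 0.
  transitivity (\sum_k (2%:R - (a k * c^* + c * (a k)^* ))).
    by apply: eq_bigr => k _; rewrite rmorphB /= mulrBl !mulrBr ha hc; ring.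
  rewrite sumrB sumr_const card_ord big_split /= -mulr_suml -mulr_sumr -rmorph_sum /= hs.
  rewrite rmorphM /= conjC_nat.
  transitivity (N%:R * (2%:R - (c * c^* + c * c^*)) : C); first by rewrite -mulr_natl; ring.
  by rewrite hc -[2%:R]/(1 + 1) subrr mulr0.
move=> k; have := psumr_eq0P (fun k _ => mul_conjC_ge0 (a k - c)) e (i := k) isT.
by move/eqP; rewrite mul_conjC_eq0 subr_eq0 => /eqP.
Qed.
End S10.
Section S11.
Context {C : numClosedFieldType} (n : nat) (A : 'M[C]_n.+1).
Hypothesis hd : forall i, A i i = 1.

Lemma herm_entry : A ^t* = A -> forall i j, A j i = (A i j)^*.
Proof. by move=> h i j; have := congr1 (fun X : 'M[C]_n.+1 => X i j) h; rewrite !mxE => <-; rewrite conjCK. Qed.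

Lemma schurA1 : schur A 1%:M = 1%:M.
Proof.
apply/matrixP => i j; rewrite !mxE.
by case: (eqVneq i j) => [->|] /=; rewrite ?hd ?mulr1 ?mulr0.
Qed.

Lemma v_KK : [/\ adjmx A = A,
        char_poly A = 'X ^+ n * ('X - (n.+1%:R)%:P)
      & schur_norm_eq1 A] -> KK A.
Proof.
move=> [hH hch [hN _]]; rewrite /adjmx in hH.
have hc := herm_entry hH.
have hb i j : A i j * (A i j)^* <= 1.
  have := hN _ (opnorm_delta i j) (delta_mx j 0).
  rewrite schur_delta -scalemxAl delta_mul mxE eqxx /= scalerA mulr1.
  rewrite -[delta_mx j 0]scale1r !vnorm2_sd normr1 !expr1n mul1r.
  by rewrite normCK.
have e := Cayley_Hamilton A.
rewrite hch rmorphM rmorphXn rmorphB /= horner_mx_X horner_mx_C in e.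
have hNm : (A - (n.+1%:R)%:M) ^t* = A - (n.+1%:R)%:M.
  by rewrite linearB /= map_mxB hH tr_scalar_mx map_scalar_mx /= conjC_nat.
have AN : A * (A - (n.+1%:R)%:M) = 0.
  case: n A hd hH hc hb e hNm => [|m] B _ hH' _ _ e hNm.
    by rewrite expr0 mul1r in e; rewrite e mulr0.
  exact: (reduce hH' hNm e).
have hsq i j : \sum_k A i k * A k j = n.+1%:R * A i j.
  move/eqP: AN; rewrite mulrBr subr_eq0 -mulmxE mul_mx_scalar => /eqP AA.
  by have := congr1 (fun X : 'M[C]_n.+1 => X i j) AA; rewrite !mxE.
have hu i j : A i j * (A i j)^* = 1.
  have s0 : \sum_k (1 - A i k * (A i k)^* ) = 0.
    rewrite sumrB sumr_const card_ord.
    rewrite (eq_bigr (fun k => A i k * A k i)) => [|k _]; last by rewrite (hc i k).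
    by rewrite hsq hd mulr1 subrr.
  have hb' k : 0 <= 1 - A i k * (A i k)^* by rewrite subr_ge0.
  have := psumr_eq0P (fun k _ => hb' k) s0 (i := j) isT.
  by move/eqP; rewrite subr_eq0 => /eqP <-.
split; last by move=> i j; apply: hc.
move=> i j k.
have := @sum_unit_eq _ n.+1 (fun l => A i l * A l k) (A i k).
apply => //.
by move=> l; rewrite rmorphM /= mulrACA !hu mulr1.
Qed.
End S11.
Section S12.
Context {C : numClosedFieldType} (n : nat) (A : 'M[C]_n.+1).
Hypothesis hd : forall i, A i i = 1.

Lemma KK_v : KK A -> [/\ adjmx A = A,
        char_poly A = 'X ^+ n * ('X - (n.+1%:R)%:P)
      & schur_norm_eq1 A].
Proof.
move=> hK; have [hm hc] := hK.
have [_ habs _] := KK_iv hd hK.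
split; [exact: KK_herm | exact: KK_char | split].
  move=> B hB y.
  pose z : 'cV[C]_n.+1 := \col_j (A 0 j * y j 0).
  have e1 : vnorm2 (schur A B *m y) = vnorm2 (B *m z).
    rewrite /vnorm2; apply: eq_bigr => i _; congr (_ ^+ 2).
    have -> : (schur A B *m y) i 0 = A i 0 * (B *m z) i 0.
      rewrite !mxE mulr_sumr; apply: eq_bigr => j _; rewrite !mxE -(hm i 0 j); ring.
    by rewrite normrM habs mul1r.
  have e2 : vnorm2 z = vnorm2 y.
    by rewrite /vnorm2; apply: eq_bigr => j _; rewrite !mxE normrM habs mul1r.
  by rewrite e1 -e2; apply: hB.
move=> k /andP [k0 k1]; exists 1%:M; split.
  by move=> x; rewrite mul1mx expr1n mul1r.
move=> h; have := h (delta_mx 0 0).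
rewrite (schurA1 hd) mul1mx -[delta_mx _ _]scale1r vnorm2_sd normr1 expr1n mulr1.
have lt : k ^+ 2 < 1 by rewrite exprn_ilt1.
by move=> le; have := lt_le_trans lt le; rewrite ltxx.
Qed.
End S12.
Section S13.
Context {C : numClosedFieldType}.

Lemma adj_mxblock (p : nat) (q_ : 'I_p -> nat) (B : forall i j, 'M[C]_(q_ i, q_ j)) :
  (\mxblock_(i, j) B i j) ^t* = \mxblock_(i, j) (B j i) ^t*.
Proof. by apply/matrixP => i j; rewrite !mxE. Qed.

Lemma psd_conj m (U V M : 'M[C]_m) : U *m V = 1%:M -> V *m U = 1%:M -> V = U ^t* ->
  psdmx M -> psdmx (U *m M *m V).
Proof.
move=> UV VU eV [hH hev]; split.
  by rewrite !adj_mul eV trmxCK hH mulmxA.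
move=> a /eigenvalueP [v hv v0]; apply: hev; apply/eigenvalueP.
exists (v *m U).
  have -> : v *m U *m M = v *m (U *m M *m V) *m U.
    by rewrite !mulmxA -(mulmxA _ V U) VU mulmx1.
  by rewrite hv -scalemxAl.
apply: contra v0 => /eqP h; apply/eqP.
by rewrite -[v]mulmx1 -UV mulmxA h mul0mx.
Qed.

Lemma psd_const m : psdmx (const_mx 1 : 'M[C]_m).
Proof.
split; first by apply/matrixP => i j; rewrite !mxE conjC1.
move=> a /eigenvalueP [v hv v0].
pose s := \sum_i v 0 i.
have hj j : a * v 0 j = s.
  have := congr1 (fun X : 'rV[C]_m => X 0 j) hv; rewrite !mxE => <-.
  by apply: eq_bigr => i _; rewrite mxE mulr1.
have has : a * s = s * m%:R.
  have -> : m%:R = \sum_(i < m) (1 : C) by rewrite sumr_const card_ord.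
  rewrite /s !mulr_sumr; apply: eq_bigr => i _.
  by rewrite hj mulr1.
have [j vj] : exists j, v 0 j != 0.
  case: (pickP (fun j => v 0 j != 0)) => [j hj0 | h0]; first by exists j.
  case/negP: v0; apply/eqP/matrixP => p q; rewrite ord1 mxE.
  by have := h0 q => /= /negbFE /eqP.
case: (eqVneq s 0) => [s0|s0].
  have := hj j; rewrite s0 => /eqP; rewrite mulf_eq0 (negbTE vj) orbF.
  by move/eqP ->.
have -> : a = m%:R by apply: (mulIf s0); rewrite has mulrC.
by rewrite ler0n.
Qed.
End S13.
Section S14.
Context {C : numClosedFieldType}.

Lemma mxdiag_mul N k (D1 D2 : 'M[C]_N) :
  \mxdiag_(i < k) D1 *m \mxdiag_(i < k) D2 = \mxdiag_(i < k) (D1 *m D2).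
Proof.
rewrite [X in _ *m X]/mxdiag mul_mxdiag_mxblock /mxdiag; apply: eq_mxblock => i j.
by case: (i == j); rewrite ?conform_mx_id ?mulmx0.
Qed.

Lemma adj_mxdiag N k (D : 'M[C]_N) :
  (\mxdiag_(i < k) D) ^t* = \mxdiag_(i < k) D ^t*.
Proof.
rewrite /mxdiag adj_mxblock; apply: eq_mxblock => i j.
rewrite eq_sym; case: (i == j); rewrite ?conform_mx_id //.
by rewrite trmx0 map_mx0.
Qed.
End S14.

Section S15.
Context {C : numClosedFieldType} (n : nat) (A : 'M[C]_n.+1).
Hypothesis hd : forall i, A i i = 1.

Lemma KK_ii : KK A -> completely_positive (schur A) /\ algebra_iso (schur A).
Proof.
move=> hK; have [hm hc] := hK; have hu := KK_norm hd hK.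
have hz i j : A i j != 0.
  by apply/eqP => e; have := hu i j; rewrite e mul0r => /eqP; rewrite eq_sym oner_eq0.
split.
  pose D : 'M[C]_n.+1 := diag_mx (\row_i A i 0).
  have hS B : schur A B = D *m B *m D ^t*.
    apply/matrixP => i j; rewrite tr_diag_mx map_diag_mx mul_mx_diag mul_diag_mx !mxE.
    rewrite -[_ (A j 0)]/((A j 0)^*) -(hc j 0) -(hm i 0 j); ring.
  have DDt : D *m D ^t* = 1%:M.
    apply/matrixP => i j; rewrite tr_diag_mx map_diag_mx mul_mx_diag !mxE.
    by case: (eqVneq i j) => [->|ne] /=; rewrite ?mulr1n ?mulr0n ?mul0r ?hu.
  have DtD : D ^t* *m D = 1%:M.
    apply/matrixP => i j; rewrite tr_diag_mx map_diag_mx mul_mx_diag !mxE.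
    case: (eqVneq i j) => [->|ne] /=; rewrite ?mulr1n ?mulr0n ?mul0r //.
    by rewrite mulrC hu.
  move=> k X hX.
  have -> : ampl (schur A) X =
      \mxdiag_(i < k) D *m blockmx X *m \mxdiag_(i < k) D ^t*.
    rewrite /ampl /blockmx mul_mxdiag_mxblock mul_mxblock_mxdiag.
    by apply: eq_mxblock => i j; rewrite hS.
  apply: psd_conj => //.
  - by rewrite mxdiag_mul DDt mxdiagZ.
  - by rewrite mxdiag_mul DtD mxdiagZ.
  - by rewrite adj_mxdiag.
split.
- by move=> a B D; apply/matrixP => i j; rewrite !mxE; ring.
- exact: (KK_i hK).1.
- exact: schurA1.
- exists (schur (entry_inv A)) => B; apply/matrixP => i j; rewrite !mxE.
    by rewrite mulrA mulVf ?mul1r.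
  by rewrite mulrA mulfV ?mul1r.
Qed.

Lemma ii_KK : completely_positive (schur A) /\ algebra_iso (schur A) -> KK A.
Proof.
move=> [hcp [_ hmul _ _]].
have hH : A ^t* = A.
  have := hcp 1%N (fun _ _ => const_mx 1).
  rewrite /blockmx /ampl mxblock_const => /(_ (psd_const _)) [+ _].
  have -> : schur A (const_mx 1) = A by apply/matrixP => i j; rewrite !mxE mulr1.
  rewrite adj_mxblock => /(congr1 (fun X => submxblock X ord0 ord0)).
  by rewrite !mxblockK.
split; last by apply: herm_entry.
move=> i j k; have := hmul (delta_mx i j) (delta_mx j k).
rewrite mul_delta_mx !schur_delta -scalemxAl -scalemxAr mul_delta_mx scalerA.
by move/matrixP/(_ i k); rewrite !mxE !eqxx /= !mulr1 => ->.
Qed.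
End S15.
Unset Implicit Arguments.

Theorem theorem2p4 (C : numClosedFieldType) (n : nat) (A : 'M[C]_n) :
  (0 < n)%N ->
  schur A 1%:M = 1%:M ->
  [<->
    (* (i) *)
    (forall B D : 'M[C]_n, schur A (B *m D) = schur A B *m schur A D) /\
    (forall B : 'M[C]_n, schur A (adjmx B) = adjmx (schur A B));
    (* (ii) *)
    completely_positive (schur A) /\ algebra_iso (schur A);
    (* (iii) *)
    [/\ \rank A = 1%N, A \is normalmx & forall i, A i i = 1];
    (* (iv) *)
    [/\ \rank A = 1%N, forall i j, `|A i j| = 1 & forall i, A i i = 1];
    (* (v) *)
    [/\ adjmx A = A,
        char_poly A = 'X ^+ n.-1 * ('X - (n%:R)%:P)
      & schur_norm_eq1 A];
    (* (vi) *)
    [/\ forall i j, A i j != 0,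
        psdmx A /\ (forall i, A i i = 1)
      & psdmx (entry_inv A) /\ (forall i, entry_inv A i i = 1)]
  ].
Proof.
case: n A => [//|n] A _ hA1.
have hd : forall i, A i i = 1.
  by move=> i; have := congr1 (fun X : 'M[C]_n.+1 => X i i) hA1; rewrite !mxE eqxx mulr1.
tfae.
- by move=> h; apply: (KK_ii hd); apply: i_KK.
- by move=> h; apply: (KK_iii hd); apply: (ii_KK h).
- by move=> h; apply: (KK_iv hd); apply: (iii_KK hd).
- by move=> h; apply: (KK_v hd); apply: (iv_KK hd).
- by move=> h; apply: (KK_vi hd); apply: (v_KK hd).
- by move=> h; apply: (KK_i (A := A)); apply: (vi_KK hd).
Qed.
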